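(* Let $\mathcal{A}$ be a Boolean relational structure with finite signature such that $c_0\in\langle\mathcal{A}\rangle$. If an $n$-ary Boolean relation $R\neq\emptyset$ is not 0-valid, then $c_1\in\langle\mathcal{A}\cup\{R\}\rangle_{\leq 1}$.
   Context: Domain $\{0,1\}$; $c_0=\{(0)\}$, $c_1=\{(1)\}$. A Boolean relation is 0-valid if it is invariant under the constant operation $0$ (i.e. for nonempty relations, it contains the all-$0$ tuple). $\langle\mathcal{A}\rangle$ is the set of relations pp-definable over $\mathcal{A}$ (formulas $\exists\bar y\,\bigwedge_i R_i(\mathbf{x}_i)$ with $R_i$ in $\mathcal{A}$ or equality). $\langle\mathcal{A}\cup\{R\}\rangle_{\leq 1}$ is the set of relations pp-definable over $\mathcal{A}\cup\{R\}$ using at most one atom with relation $R$. *)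

(* Defs.v *)
From mathcomp Require Import all_boot.
Set Implicit Arguments. Unset Strict Implicit. Unset Printing Implicit Defensive.

(* A Boolean relation: an arity n together with a set of n-tuples over {0,1}
   (false = 0, true = 1). *)
Definition brel : Type := {n : nat & {set n.-tuple bool}}.

Definition mkrel (n : nat) (R : {set n.-tuple bool}) : brel := existT _ n R.

Definition c0 : brel := mkrel [set [tuple false]].
Definition c1 : brel := mkrel [set [tuple true]].

(* 0-valid: invariant under the constant-0 operation, i.e. empty or
   containing the all-0 tuple. *)
Definition zero_valid (r : brel) : Prop :=
  tagged r = set0 \/ nseq_tuple (tag r) false \in tagged r.

Inductive atom (V : nat) : Type :=
| AtomRel (r : brel) (s : (tag r).-tuple 'I_V)
| AtomEq (i j : 'I_V).

Definition atom_in (S : seq brel) V (a : atom V) : bool :=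
  match a with AtomRel r _ => r \in S | AtomEq _ _ => true end.

Definition atom_uses (R : brel) V (a : atom V) : bool :=
  match a with AtomRel r _ => r == R | AtomEq _ _ => false end.

Definition atom_sat V (f : 'I_V -> bool) (a : atom V) : bool :=
  match a with
  | AtomRel r s => map_tuple f s \in tagged r
  | AtomEq i j => f i == f j
  end.

(* r is pp-definable over the relations in S, via a formula
   exists y_1..y_m, /\ atoms, where the free variables x_0..x_{n-1} are
   indices 0..n-1 and the quantified variables are n..n+m-1;
   additionally the list of atoms must satisfy the side condition [ok]. *)
Definition ppdef_with (S : seq brel) (ok : forall V, seq (atom V) -> Prop)
  (r : brel) : Prop :=
  exists (m : nat) (phi : seq (atom (tag r + m))),
    ok _ phi /\ all (@atom_in S _) phi /\
    forall t : (tag r).-tuple bool,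
      t \in tagged r <->
      exists y : m.-tuple bool,
        all (atom_sat (fun i : 'I_(tag r + m) => nth false (t ++ y) i)) phi.

Definition ppdef (S : seq brel) (r : brel) : Prop :=
  ppdef_with S (fun _ _ => True) r.

Definition ppdef_le1 (S : seq brel) (R : brel) (r : brel) : Prop :=
  ppdef_with (R :: S) (fun V phi => count (@atom_uses R V) phi <= 1) r.

(* Main.v *)
Require Import Defs.
From mathcomp Require Import all_boot.

Set Implicit Arguments. Unset Strict Implicit. Unset Printing Implicit Defensive.

Definition remap V W (sg : 'I_V -> 'I_W) (a : atom V) : atom W :=
  match a with
  | AtomRel r s => @AtomRel W r (map_tuple sg s)
  | AtomEq i j => AtomEq (sg i) (sg j)
  end.

Lemma sat_remap V W (sg : 'I_V -> 'I_W) (f : 'I_W -> bool) a :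
  atom_sat f (remap sg a) = atom_sat (f \o sg) a.
Proof.
case: a => [r s|i j] //=.
suff -> : map_tuple f (map_tuple sg s) = map_tuple (f \o sg) s by [].
by apply: val_inj; rewrite /= -map_comp.
Qed.

Lemma sat_ext V (f g : 'I_V -> bool) a : f =1 g -> atom_sat f a = atom_sat g a.
Proof.
move=> H; case: a => [r s|i j] /=; last by rewrite !H.
suff -> : map_tuple f s = map_tuple g s by [].
by apply: val_inj; rewrite /=; exact: eq_map.
Qed.

Lemma uses_remap R V W (sg : 'I_V -> 'I_W) a :
  atom_uses R (remap sg a) = atom_uses R a.
Proof. by case: a. Qed.

Lemma in_remap S V W (sg : 'I_V -> 'I_W) a :
  atom_in S (remap sg a) = atom_in S a.
Proof. by case: a. Qed.

Lemma count_remap_filter R V W (sg : 'I_V -> 'I_W) (phi : seq (atom V)) :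
  count (@atom_uses R W) (map (remap sg) (filter (fun a => ~~ atom_uses R a) phi)) = 0.
Proof.
elim: phi => //= a phi IH; case: ifP => //= H.
by rewrite uses_remap (negbTE H) IH.
Qed.

Lemma map_constb (T : Type) (c : bool) (s : seq T) : map (fun _ => c) s = nseq (size s) c.
Proof. by elim: s => //= ? s ->. Qed.

Lemma all_combine T (P Q H C : pred T) (phi : seq T) :
  all P phi -> all Q (filter C phi) ->
  (forall b, P b -> (C b -> Q b) -> H b) -> all H phi.
Proof.
elim: phi => //= b phi IH /andP[Pb Pphi]; case: ifP => Cb /=.
  case/andP=> Qb Qphi K; rewrite (K b Pb (fun _ => Qb)) (IH Pphi Qphi K) //.
move=> Qphi K; rewrite (K b Pb) ?(IH Pphi Qphi K) // => Cb'; by rewrite Cb' in Cb.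
Qed.

Theorem lemma12 (A : seq brel) (n : nat) (R : {set n.-tuple bool}) :
  ppdef A c0 ->
  R != set0 ->
  ~ zero_valid (mkrel R) ->
  ppdef_le1 A (mkrel R) c1.
Proof.
move=> [m [phi [_ [phiA Hphi]]]] RN0 NZ.
have z0 : nseq_tuple n false \notin R by apply/negP => H; apply: NZ; right.
have [y0 Hy0] : exists y0 : m.-tuple bool,
    all (atom_sat (fun i : 'I_(1 + m) => nth false ([tuple false] ++ y0) i)) phi.
  by apply/(Hphi [tuple false]); rewrite /= in_set1.
set a := fun i : 'I_(1 + m) => nth false ([tuple false] ++ y0) i.
have [t0 t0R Ht0] : exists2 t0, t0 \in R &
    (map_tuple negb t0 \notin R) \/ (forall t, t \in R -> map_tuple negb t \in R).
  case: (pickP (fun t => (t \in R) && (map_tuple negb t \notin R))) =>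
     [t0 /andP[? ?]|Hn]; first by exists t0 => //; left.
  case/set0Pn: RN0 => t0 t0R; exists t0 => //; right => t tR.
  by move: (Hn t); rewrite tR /= => /negbFE.
pose sg := fun v : 'I_(1 + m) => if a v then (ord0 : 'I_2) else (ord_max : 'I_2).
pose s : n.-tuple 'I_2 := map_tuple (fun b => if b then (ord0 : 'I_2) else ord_max) t0.
pose psi : seq (atom (1 + 1)) := @AtomRel 2 (mkrel R) (s : (tag (mkrel R)).-tuple _)
   :: map (remap sg) (filter (fun b => ~~ atom_uses (mkrel R) b) phi).
exists 1, psi; split; [|split].
- by rewrite /psi /= eqxx count_remap_filter.
- rewrite /psi /= in_cons eqxx /= all_map all_filter.
  apply: sub_all phiA => b Hat; apply/implyP => _ /=.
  rewrite in_remap; case: b Hat => //= r _ H; by rewrite in_cons H orbT.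
move=> t; case: t => [[|x [|? ?]] // Ht].
have Es : forall y : 1.-tuple bool,
    val (map_tuple (fun i : 'I_(1 + 1) => nth false (Tuple Ht ++ y) i) s)
    = map (fun b => if b then x else nth false y 0) t0.
  move=> y; rewrite /= -map_comp; apply: eq_map => b /=; by case: b.
split.
- rewrite /= in_set1 => /eqP/(congr1 val) /= [Ex]; subst x.
  exists [tuple false]; rewrite /= andbC; apply/andP; split.
    rewrite all_map all_filter; apply: sub_all Hy0 => b Hb; apply/implyP => _.
    rewrite /preim /= (sat_remap sg) (sat_ext (g := a)) // => v; rewrite /= /sg; by case: (a v).
  have := Es [tuple false]; move: Ht Es => Ht Es E1.
  suff E : map_tuple (fun i : 'I_(1 + 1) => nth false (Tuple Ht ++ [tuple false]) i) s = t0.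
    by move: E; rewrite /= => ->.
  apply: val_inj; rewrite E1 /= -[RHS]map_id; apply: eq_map; by case.
- case=> y; case: y => [[|z [|? ?]] // Hy]; rewrite /= => /andP[HR Hrest].
  case: x Ht Es HR Hrest => Ht Es HR Hrest.
    by rewrite in_set1; apply/eqP/val_inj.
  exfalso; case: z Hy Es HR Hrest => Hy Es HR Hrest.
  + have E : map_tuple (fun i : 'I_(1 + 1) => nth false (Tuple Ht ++ Tuple Hy) i) s
             = map_tuple negb t0.
      apply: val_inj; rewrite Es /=; apply: eq_map; by case.
    rewrite E in HR; case: Ht0 => [H|NC]; first by rewrite HR in H.
    have Hneg : all (atom_sat (fun i => nth false ([tuple true] ++ map_tuple negb y0) i)) phi.
      rewrite all_map in Hrest.
      apply: (all_combine Hy0 Hrest) => b Hb Hc.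
      rewrite -(sat_ext (f := negb \o a)); last first.
        case=> [[|k] Hk] //=; rewrite /a /= (nth_map false) //.
        by rewrite size_tuple -ltnS.
      case: (boolP (atom_uses (mkrel R) b)) => Hu.
        move: Hb; case: b Hc Hu => //= r s' _ /eqP Er; subst r => /= Hs.
        suff -> : map_tuple (negb \o a) s' = map_tuple negb (map_tuple a s') by apply: NC.
        by apply: val_inj; rewrite /= -map_comp.
      have := Hc Hu; rewrite /preim /= (sat_remap sg).
      rewrite (sat_ext (g := negb \o a)) // => v.
      by rewrite /= /sg; case: (a v).
    by have := (proj2 (Hphi [tuple true])) (ex_intro _ (map_tuple negb y0) Hneg); rewrite /= in_set1.
  + have E : map_tuple (fun i : 'I_(1 + 1) => nth false (Tuple Ht ++ Tuple Hy) i) s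
             = nseq_tuple n false.
      apply: val_inj; rewrite Es /= (@eq_map _ _ _ (fun _ => false)); last by case.
      by rewrite map_constb size_tuple.
    by rewrite E in HR; rewrite HR in z0.
Qed.
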